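(* Let $G$ be a path graph with $L$ edges rooted at a vertex $O$ that is not an endpoint, and let all edges have activation probability $p\in(0,1]$. Then the value of the stochastic search game is $$\mathrm{val}(p)=\frac{L}{p}+\frac{1}{1-(1-p)^2}-\frac1p.$$ Moreover, the following are optimal strategies: - for the hider, the distribution putting mass $\lambda_i/L$ on the extreme edge of side $i$, where $\lambda_i$ is the number of edges on side $i$ of $O$; - for the searcher, the uniform depth-first strategy.
   Context: Setting: the stochastic search game on $G$. Every edge has length $1$ and is active at each stage independently with probability $p$. The hider chooses an edge and stays there. The searcher starts at $O$; at each stage, knowing which edges are currently active, she waits or traverses an active edge incident to her position. The hider's payoff is the expected first time the searcher traverses his edge. Uniform depth-first strategy, with edges oriented away from $O$: at the current vertex, - if some untraversed outgoing edge is active, take one chosen uniformly among the active untraversed outgoing edges; - if all untraversed outgoing edges are inactive, wait; - once all outgoing edges have been traversed, go back toward $O$ when that edge is active, and wait otherwise. *)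

(* Defs.v *)
From Stdlib Require Import Reals List Arith Bool.
Import ListNotations.
Open Scope R_scope.

(* Path graph with L edges: vertices 0..L, edge j joins vertices j and j+1.
   The root O is vertex k with 0 < k < L. *)

Inductive move := Wait | Left | Right.

Definition move_eqb (m1 m2 : move) : bool :=
  match m1, m2 with
  | Wait, Wait | Left, Left | Right, Right => true
  | _, _ => false
  end.

(* An activation pattern for one stage: the j-th entry says whether edge j is
   active (lists of length L). *)
Definition activation := list bool.

Fixpoint all_acts (n : nat) : list activation :=
  match n with
  | O => [[]]
  | S n' => map (cons true) (all_acts n') ++ map (cons false) (all_acts n')
  end.

Definition actprob (p : R) (a : activation) : R :=
  fold_right (fun (b : bool) (r : R) => (if b then p else 1 - p) * r) 1 a.

(* A history: the sequence (chronological) of past activation patterns and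
   the searcher's actions. *)
Definition history := list (activation * move).

Definition newpos (pos : nat) (m : move) : nat :=
  match m with Wait => pos | Left => pred pos | Right => S pos end.

Definition edge_of (pos : nat) (m : move) : list nat :=
  match m with
  | Wait => []
  | Left => if (0 <? pos)%nat then [pred pos] else []
  | Right => [pos]
  end.

Definition hits (pos : nat) (m : move) (e : nat) : bool :=
  existsb (Nat.eqb e) (edge_of pos m).

Fixpoint walk (pos : nat) (h : history) : nat * list nat :=
  match h with
  | [] => (pos, [])
  | (_, m) :: h' =>
      let r := walk (newpos pos m) h' in (fst r, edge_of pos m ++ snd r)
  end.

Definition pos_of (k : nat) (h : history) : nat := fst (walk k h).
Definition traversed (k : nat) (h : history) (e : nat) : bool :=
  existsb (Nat.eqb e) (snd (walk k h)).

(* Behavioural (randomized, full-recall) searcher strategy: given the past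
   history and the current activation pattern, a probability distribution on
   moves. *)
Definition strategy := history -> activation -> move -> R.

Definition legal (L k : nat) (s : strategy) : Prop :=
  forall (h : history) (a : activation),
    let pos := pos_of k h in
    (forall m, 0 <= s h a m) /\
    s h a Wait + s h a Left + s h a Right = 1 /\
    (s h a Left <> 0 ->
       (0 < pos)%nat /\ (pred pos < L)%nat /\ nth (pred pos) a false = true) /\
    (s h a Right <> 0 -> (pos < L)%nat /\ nth pos a false = true).

Definition sumR (l : list R) : R := fold_right Rplus 0 l.

(* notfound L p s e t pos h = probability that, continuing from history h
   (current position pos), the searcher does not traverse edge e during the
   next t stages. *)
Fixpoint notfound (L : nat) (p : R) (s : strategy) (e : nat) (t : nat)
    (pos : nat) (h : history) : R :=
  match t with
  | O => 1
  | S t' =>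
      sumR (map (fun a =>
        actprob p a *
        sumR (map (fun m =>
          s h a m *
          (if hits pos m e then 0
           else notfound L p s e t' (newpos pos m) (h ++ [(a, m)])))
          [Wait; Left; Right]))
        (all_acts L))
  end.

(* P(T_e > t), T_e = first stage at which edge e is traversed, starting at O=k. *)
Definition tail_prob (L k : nat) (p : R) (s : strategy) (e t : nat) : R :=
  notfound L p s e t k [].

(* Partial sums of E[T_e] = sum_{t>=0} P(T_e > t). *)
Definition exp_partial (L k : nat) (p : R) (s : strategy) (e N : nat) : R :=
  sum_f_R0 (fun t => tail_prob L k p s e t) N.

Definition hider_partial (L k : nat) (p : R) (s : strategy) (N : nat) : R :=
  sum_f_R0 (fun t => INR k / INR L * tail_prob L k p s 0 t
                     + INR (L - k) / INR L * tail_prob L k p s (pred L) t) N.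

Definition dfs (L k : nat) : strategy :=
  fun h a m =>
    let pos := pos_of k h in
    let tr := traversed k h in
    let act e := ((e <? L)%nat && nth e a false)%bool in
    if (pos =? k)%nat then
      let cl := (negb (tr (pred k)) && act (pred k))%bool in
      let cr := (negb (tr k) && act k)%bool in
      match m with
      | Left => if cl then (if cr then 1/2 else 1) else 0
      | Right => if cr then (if cl then 1/2 else 1) else 0
      | Wait => if (cl || cr)%bool then 0 else 1
      end
    else
      let go :=
        if (pos <? k)%nat then
          (* outgoing edge is pos-1 (exists iff pos > 0); back edge is pos *)
          if ((0 <? pos)%nat && negb (tr (pred pos)))%bool
          then (if act (pred pos) then Left else Wait)
          else (if act pos then Right else Wait)
        else
          (* outgoing edge is pos (exists iff pos < L); back edge is pos-1 *)
          if ((pos <? L)%nat && negb (tr pos))%bool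
          then (if act pos then Right else Wait)
          else (if act (pred pos) then Left else Wait)
      in if move_eqb m go then 1 else 0.

Definition game_value (L : nat) (p : R) : R :=
  INR L / p + 1 / (1 - (1 - p) ^ 2) - 1 / p.

(* Main.v *)
Require Import Defs.
From Stdlib Require Import Reals List Arith Lra Lia Bool.
Import ListNotations.
Open Scope R_scope.

Lemma sumR_app : forall l1 l2, sumR (l1 ++ l2) = sumR l1 + sumR l2.
Proof. induction l1; intros; simpl; [lra| rewrite IHl1; lra]. Qed.

Lemma sumR_map_plus {A} (f g : A -> R) l :
  sumR (map (fun x => f x + g x) l) = sumR (map f l) + sumR (map g l).
Proof. induction l; simpl; [lra| rewrite IHl; lra]. Qed.

Lemma sumR_map_scal {A} (c : R) (f : A -> R) l :
  sumR (map (fun x => c * f x) l) = c * sumR (map f l).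
Proof. induction l; simpl; [lra| rewrite IHl; lra]. Qed.

Lemma sumR_map_ext {A} (f g : A -> R) l :
  (forall x, In x l -> f x = g x) -> sumR (map f l) = sumR (map g l).
Proof. induction l; simpl; intros H; auto. rewrite H, IHl; auto. Qed.

Lemma sumR_map_le {A} (f g : A -> R) l :
  (forall x, In x l -> f x <= g x) -> sumR (map f l) <= sumR (map g l).
Proof. induction l; simpl; intros H; [lra|]. specialize (IHl (fun x h => H x (or_intror h))).
  specialize (H a (or_introl eq_refl)). lra. Qed.

Lemma actprob_nonneg p a : 0 <= p <= 1 -> 0 <= actprob p a.
Proof. intros Hp; induction a; simpl; [lra|]. destruct a; apply Rmult_le_pos; lra. Qed.

Lemma sum_acts_S p n (g : activation -> R) :
  sumR (map (fun a => actprob p a * g a) (all_acts (S n))) =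
  p * sumR (map (fun a => actprob p a * g (true :: a)) (all_acts n)) +
  (1 - p) * sumR (map (fun a => actprob p a * g (false :: a)) (all_acts n)).
Proof.
  simpl. rewrite map_app, sumR_app, !map_map, <- !sumR_map_scal.
  f_equal; apply sumR_map_ext; intros; simpl; ring.
Qed.

Lemma sum_acts_const p n c :
  sumR (map (fun a => actprob p a * c) (all_acts n)) = c.
Proof.
  induction n. simpl; ring.
  rewrite sum_acts_S. rewrite IHn. ring.
Qed.

Definition indb (b : bool) : R := if b then 1 else 0.

Lemma sum_acts_nth p n : forall i, (i < n)%nat ->
  sumR (map (fun a => actprob p a * indb (nth i a false)) (all_acts n)) = p.
Proof.
  induction n; intros i Hi; [lia|]. rewrite sum_acts_S.
  destruct i; simpl.
  - unfold indb; rewrite !sum_acts_const. ring.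
  - rewrite IHn by lia. ring.
Qed.

Lemma sum_acts_nth_le p n i : 0 <= p <= 1 ->
  sumR (map (fun a => actprob p a * indb (nth i a false)) (all_acts n)) <= p.
Proof.
  intros Hp. destruct (Nat.lt_ge_cases i n). rewrite sum_acts_nth by auto; lra.
  rewrite (sumR_map_ext _ (fun a => actprob p a * 0)).
  rewrite sum_acts_const; lra.
  intros a Ha. assert (length a = n).
  { clear -Ha. revert a Ha; induction n; simpl; intros a Ha.
    destruct Ha as [<-|[]]; auto.
    apply in_app_or in Ha; destruct Ha as [Ha|Ha]; apply in_map_iff in Ha;
    destruct Ha as [a' [<- Ha']]; simpl; f_equal; auto. }
  rewrite nth_overflow by lia. reflexivity.
Qed.

Lemma sum_acts_and p n : forall i j, (i < j)%nat -> (j < n)%nat ->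
  sumR (map (fun a => actprob p a * indb (nth i a false && nth j a false)) (all_acts n)) = p * p.
Proof.
  induction n; intros i j Hij Hj; [lia|]. rewrite sum_acts_S.
  destruct i; destruct j; try lia; simpl.
  - rewrite sum_acts_nth by lia.
    rewrite sum_acts_const. ring.
  - rewrite IHn by lia. ring.
Qed.

Lemma sum_acts_or p n i j : (i < j)%nat -> (j < n)%nat ->
  sumR (map (fun a => actprob p a * indb (nth i a false || nth j a false)) (all_acts n)) = 1 - (1-p)^2.
Proof.
  intros. rewrite (sumR_map_ext _ (fun a => actprob p a * indb (nth i a false) +
     (actprob p a * indb (nth j a false) + (-1) * (actprob p a * indb (nth i a false && nth j a false))))).
  rewrite !sumR_map_plus, sumR_map_scal, sum_acts_and, !sum_acts_nth by lia. ring.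
  intros a _. destruct (nth i a false), (nth j a false); unfold indb; simpl; ring.
Qed.

Lemma walk_snoc pos h a m :
  walk pos (h ++ [(a, m)]) =
  (newpos (fst (walk pos h)) m, snd (walk pos h) ++ edge_of (fst (walk pos h)) m).
Proof.
  revert pos; induction h as [|[a' m'] h IH]; intros pos; simpl.
  - rewrite app_nil_r. reflexivity.
  - rewrite IH. simpl. rewrite app_assoc. reflexivity.
Qed.

Lemma pos_of_snoc k h a m : pos_of k (h ++ [(a, m)]) = newpos (pos_of k h) m.
Proof. unfold pos_of. rewrite walk_snoc. reflexivity. Qed.

Lemma traversed_snoc k h a m e :
  traversed k (h ++ [(a, m)]) e = traversed k h e || hits (pos_of k h) m e.
Proof. unfold traversed, pos_of, hits. rewrite walk_snoc. simpl. rewrite existsb_app. reflexivity. Qed.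

Lemma pos_of_nil k : pos_of k [] = k.
Proof. reflexivity. Qed.
Lemma traversed_nil k e : traversed k [] e = false.
Proof. reflexivity. Qed.

Lemma hits_W x e : hits x Wait e = false. Proof. reflexivity. Qed.
Lemma hits_L x e : hits x Left e = ((0 <? x)%nat && (e =? pred x)%nat). 
Proof. unfold hits; simpl. destruct (0 <? x)%nat; simpl; auto. rewrite orb_false_r; auto. Qed.
Lemma hits_R x e : hits x Right e = (e =? x)%nat.
Proof. unfold hits; simpl. rewrite orb_false_r; auto. Qed.

Fixpoint Ex (L : nat) (p : R) (s : strategy) (n : nat) (h : history) (f : history -> R) : R :=
  match n with
  | O => f h
  | S n' => sumR (map (fun a => actprob p a *
        sumR (map (fun m => s h a m * Ex L p s n' (h ++ [(a, m)]) f) [Wait; Left; Right]))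
        (all_acts L))
  end.

Definition probdist (s : strategy) : Prop :=
  forall h a, (forall m, 0 <= s h a m) /\ s h a Wait + s h a Left + s h a Right = 1.

Section ExSec.
Variables (L : nat) (p : R) (s : strategy).
Hypothesis Hp : 0 <= p <= 1.
Hypothesis Hs : probdist s.

Lemma Ex_plus n : forall h f g, Ex L p s n h (fun h => f h + g h) = Ex L p s n h f + Ex L p s n h g.
Proof.
  induction n; intros; simpl; auto.
  rewrite <- sumR_map_plus. apply sumR_map_ext; intros a _. simpl.
  rewrite !IHn. ring.
Qed.

Lemma Ex_scal n : forall h c f, Ex L p s n h (fun h => c * f h) = c * Ex L p s n h f.
Proof.
  induction n; intros; simpl; auto.
  rewrite <- sumR_map_scal. apply sumR_map_ext; intros a _. simpl.
  rewrite !IHn. ring.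
Qed.

Lemma Ex_const n : forall h c, Ex L p s n h (fun _ => c) = c.
Proof.
  induction n; intros; simpl; auto.
  rewrite (sumR_map_ext _ (fun a => actprob p a * c)). apply sum_acts_const.
  intros a _. simpl. rewrite !IHn. destruct (Hs h a) as [_ H]. f_equal.
  transitivity ((s h a Wait + s h a Left + s h a Right) * c); [ring| rewrite H; ring].
Qed.

Lemma Ex1_le h f g :
  (forall a m, s h a m <> 0 -> f (h ++ [(a, m)]) <= g (h ++ [(a, m)])) ->
  Ex L p s 1 h f <= Ex L p s 1 h g.
Proof.
  intros H. simpl. apply sumR_map_le. intros a _.
  apply Rmult_le_compat_l. apply actprob_nonneg; auto.
  simpl. destruct (Hs h a) as [Hn _].
  assert (forall m, s h a m * f (h ++ [(a,m)]) <= s h a m * g (h ++ [(a,m)])).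
  { intros m. destruct (Req_dec (s h a m) 0) as [E|E]. rewrite E; lra.
    apply Rmult_le_compat_l; auto. }
  pose proof (H0 Wait); pose proof (H0 Left); pose proof (H0 Right). lra.
Qed.

Lemma Ex_mono_inv (Inv : history -> Prop) :
  (forall h a m, Inv h -> s h a m <> 0 -> Inv (h ++ [(a, m)])) ->
  forall n h f g, (forall h, Inv h -> f h <= g h) -> Inv h -> Ex L p s n h f <= Ex L p s n h g.
Proof.
  intros Hinv n; induction n; intros h f g Hfg Hh; simpl; auto.
  apply (Ex1_le h (fun h' => Ex L p s n h' f) (fun h' => Ex L p s n h' g)).
  intros a m Hm. apply IHn; auto.
Qed.

Lemma Ex_mono n h f g : (forall h, f h <= g h) -> Ex L p s n h f <= Ex L p s n h g.
Proof. intros H. apply (Ex_mono_inv (fun _ => True)); auto. Qed.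

Fixpoint sumN (n : nat) (F : nat -> R) : R :=
  match n with O => 0 | S n' => F O + sumN n' (fun t => F (S t)) end.

Lemma sumN_S n : forall F, sumN (S n) F = sumN n F + F n.
Proof. induction n; intros. simpl; ring.
  change (sumN (S (S n)) F) with (F O + sumN (S n) (fun t => F (S t))).
  rewrite IHn. simpl. ring. Qed.

Lemma sumN_f_R0 F N : sum_f_R0 F N = sumN (S N) F.
Proof. induction N. simpl; ring. rewrite sumN_S. simpl sum_f_R0. rewrite IHN. reflexivity. Qed.

Lemma sumN_Sl n F : sumN (S n) F = F O + sumN n (fun t => F (S t)).
Proof. reflexivity. Qed.

Lemma Ex1_sumN n : forall h (G : nat -> history -> R),
  Ex L p s 1 h (fun h' => sumN n (fun t => G t h')) = sumN n (fun t => Ex L p s 1 h (G t)).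
Proof.
  induction n; intros; simpl sumN.
  - apply (Ex_const 1).
  - rewrite (Ex_plus 1). f_equal. apply (IHn h (fun t => G (S t))).
Qed.

Lemma telescope_lower (Phi c : history -> R) :
  (forall h, Phi h <= c h + Ex L p s 1 h Phi) ->
  forall n h, Phi h <= sumN n (fun t => Ex L p s t h c) + Ex L p s n h Phi.
Proof.
  intros H n; induction n; intros h. simpl; lra.
  eapply Rle_trans. apply H.
  assert (Ex L p s 1 h Phi <= Ex L p s 1 h (fun h' => sumN n (fun t => Ex L p s t h' c) + Ex L p s n h' Phi)).
  { apply Ex1_le. intros; apply IHn. }
  rewrite (Ex_plus 1), Ex1_sumN in H0. rewrite sumN_Sl. change (Ex L p s 0 h ?f) with (f h).
  change (Ex L p s 1 h (fun h' => Ex L p s n h' Phi)) with (Ex L p s (S n) h Phi) in H0.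
  assert (E : sumN n (fun t => Ex L p s 1 h (fun h' => Ex L p s t h' c)) = sumN n (fun t => Ex L p s (S t) h c)).
  { reflexivity. }
  rewrite E in H0. cbv beta. lra.
Qed.

Lemma telescope_upper (Inv : history -> Prop) (Psi g : history -> R) :
  (forall h a m, Inv h -> s h a m <> 0 -> Inv (h ++ [(a, m)])) ->
  (forall h, Inv h -> g h + Ex L p s 1 h Psi <= Psi h) ->
  forall n h, Inv h -> sumN n (fun t => Ex L p s t h g) + Ex L p s n h Psi <= Psi h.
Proof.
  intros Hinv H n; induction n; intros h Hh. simpl; lra.
  eapply Rle_trans; [|apply H; auto].
  assert (Ex L p s 1 h (fun h' => sumN n (fun t => Ex L p s t h' g) + Ex L p s n h' Psi) <= Ex L p s 1 h Psi).
  { apply Ex1_le. intros; apply IHn; auto. }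
  rewrite (Ex_plus 1), Ex1_sumN in H0. rewrite sumN_Sl. change (Ex L p s 0 h ?f) with (f h).
  change (Ex L p s 1 h (fun h' => Ex L p s n h' Psi)) with (Ex L p s (S n) h Psi) in H0.
  change (sumN n (fun t => Ex L p s 1 h (fun h' => Ex L p s t h' g))) with
     (sumN n (fun t => Ex L p s (S t) h g)) in H0.
  cbv beta. lra.
Qed.

End ExSec.

Definition gE (k e : nat) (h : history) : R := if traversed k h e then 0 else 1.

Lemma notfound_Ex L k p s e t : forall h,
  gE k e h * notfound L p s e t (pos_of k h) h = Ex L p s t h (gE k e).
Proof.
  induction t; intros h; simpl. ring.
  rewrite <- sumR_map_scal. apply sumR_map_ext; intros a _. simpl.
  rewrite <- !IHt. unfold gE. rewrite !traversed_snoc, !pos_of_snoc.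
  destruct (traversed k h e); simpl; [ring|].
  destruct (hits (pos_of k h) Wait e), (hits (pos_of k h) Left e), (hits (pos_of k h) Right e); ring.
Qed.

Lemma tail_prob_Ex L k p s e t : tail_prob L k p s e t = Ex L p s t [] (gE k e).
Proof. rewrite <- notfound_Ex. unfold gE. rewrite traversed_nil. unfold tail_prob. rewrite pos_of_nil. ring. Qed.

Definition dfsS (L k x : nat) (tr : nat -> bool) (a : activation) (m : move) : R :=
    let pos := x in
    let act e := ((e <? L)%nat && nth e a false)%bool in
    if (pos =? k)%nat then
      let cl := (negb (tr (pred k)) && act (pred k))%bool in
      let cr := (negb (tr k) && act k)%bool in
      match m with
      | Left => if cl then (if cr then 1/2 else 1) else 0
      | Right => if cr then (if cl then 1/2 else 1) else 0
      | Wait => if (cl || cr)%bool then 0 else 1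
      end
    else
      let go :=
        if (pos <? k)%nat then
          if ((0 <? pos)%nat && negb (tr (pred pos)))%bool
          then (if act (pred pos) then Left else Wait)
          else (if act pos then Right else Wait)
        else
          if ((pos <? L)%nat && negb (tr pos))%bool
          then (if act pos then Right else Wait)
          else (if act (pred pos) then Left else Wait)
      in if move_eqb m go then 1 else 0.

Lemma dfs_S L k h a m : dfs L k h a m = dfsS L k (pos_of k h) (traversed k h) a m.
Proof. reflexivity. Qed.

Ltac destr_all :=
  repeat match goal with
  | |- context [(?a <? ?b)%nat] => let E := fresh "E" in destruct (a <? b)%nat eqn:E;
       [apply Nat.ltb_lt in E | apply Nat.ltb_ge in E]
  | |- context [(?a =? ?b)%nat] => let E := fresh "E" in destruct (a =? b)%nat eqn:E;
       [apply Nat.eqb_eq in E | apply Nat.eqb_neq in E]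
  | |- context [(?a <=? ?b)%nat] => let E := fresh "E" in destruct (a <=? b)%nat eqn:E;
       [apply Nat.leb_le in E | apply Nat.leb_gt in E]
  | |- context [nth ?i ?a false] => let E := fresh "N" in destruct (nth i a false) eqn:E
  | tr : nat -> bool |- context [?tr ?i] => let E := fresh "T" in destruct (tr i) eqn:E
  end.

Lemma legal_det L x (a : activation) (go : move) :
  (go = Left -> (0 < x)%nat /\ (pred x < L)%nat /\ nth (pred x) a false = true) ->
  (go = Right -> (x < L)%nat /\ nth x a false = true) ->
  let s := fun m => if move_eqb m go then 1 else 0 in
  (forall m, 0 <= s m) /\ s Wait + s Left + s Right = 1 /\
  (s Left <> 0 -> (0 < x)%nat /\ (pred x < L)%nat /\ nth (pred x) a false = true) /\
  (s Right <> 0 -> (x < L)%nat /\ nth x a false = true).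
Proof.
  intros H1 H2 s. unfold s. split; [|split; [|split]].
  - intros m; destruct m, go; simpl; lra.
  - destruct go; simpl; lra.
  - destruct go; simpl; intros C; try (exfalso; lra); apply H1; auto.
  - destruct go; simpl; intros C; try (exfalso; lra); apply H2; auto.
Qed.

Lemma andb_true_3 (b1 b2 : bool) : (b1 && b2)%bool = true -> b1 = true /\ b2 = true.
Proof. apply andb_true_iff. Qed.

Lemma dfs_legal L k : (0 < k)%nat -> (k < L)%nat -> legal L k (dfs L k).
Proof.
  intros hk0 hkL h a. unfold dfs; cbv beta zeta. set (x := pos_of k h). set (tr := traversed k h). clearbody x tr.
  destruct (x =? k)%nat eqn:Ek.
  - apply Nat.eqb_eq in Ek. subst x.
    remember (negb (tr (pred k)) && ((pred k <? L)%nat && nth (pred k) a false))%bool as cl eqn:Hcl.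
    remember (negb (tr k) && ((k <? L)%nat && nth k a false))%bool as cr eqn:Hcr.
    split; [|split; [|split]].
    + intros m; destruct m, cl, cr; simpl; lra.
    + destruct cl, cr; simpl; lra.
    + destruct cl; [|intros C; exfalso; destruct cr; simpl in C; lra]. intros _.
      symmetry in Hcl. apply andb_true_3 in Hcl as [_ Hcl]. apply andb_true_3 in Hcl as [Hcl Hn].
      apply Nat.ltb_lt in Hcl; auto.
    + destruct cr; [|intros C; exfalso; destruct cl; simpl in C; lra]. intros _.
      symmetry in Hcr. apply andb_true_3 in Hcr as [_ Hcr]. apply andb_true_3 in Hcr as [Hcr Hn].
      apply Nat.ltb_lt in Hcr; auto.
  - apply Nat.eqb_neq in Ek. apply legal_det.
    + destruct (x <? k)%nat eqn:E1.
      * destruct ((0 <? x)%nat && negb (tr (pred x)))%bool eqn:E2.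
        -- destruct ((pred x <? L)%nat && nth (pred x) a false)%bool eqn:E3; intros C; try discriminate.
           apply andb_true_3 in E2 as [E2 _]. apply andb_true_3 in E3 as [E3 E4].
           apply Nat.ltb_lt in E2, E3. auto.
        -- destruct ((x <? L)%nat && nth x a false)%bool; intros C; discriminate.
      * destruct ((x <? L)%nat && negb (tr x))%bool eqn:E2.
        -- destruct ((x <? L)%nat && nth x a false)%bool; intros C; discriminate.
        -- destruct ((pred x <? L)%nat && nth (pred x) a false)%bool eqn:E3; intros C; try discriminate.
           apply andb_true_3 in E3 as [E3 E4]. apply Nat.ltb_lt in E3. apply Nat.ltb_ge in E1. split; [lia|auto].
    + destruct (x <? k)%nat eqn:E1.
      * destruct ((0 <? x)%nat && negb (tr (pred x)))%bool eqn:E2.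
        -- destruct ((pred x <? L)%nat && nth (pred x) a false)%bool eqn:E3; intros C; discriminate.
        -- destruct ((x <? L)%nat && nth x a false)%bool eqn:E3; intros C; try discriminate.
           apply andb_true_3 in E3 as [E3 E4]. apply Nat.ltb_lt in E3. auto.
      * destruct ((x <? L)%nat && negb (tr x))%bool eqn:E2.
        -- destruct ((x <? L)%nat && nth x a false)%bool eqn:E3; intros C; try discriminate.
           apply andb_true_3 in E3 as [E3 E4]. apply Nat.ltb_lt in E3. auto.
        -- destruct ((pred x <? L)%nat && nth (pred x) a false)%bool; intros C; discriminate.
Qed.

Ltac dcmp :=
  match goal with
  | |- context [(?a <? ?b)%nat] => let E := fresh "E" in destruct (a <? b)%nat eqn:E;
       [apply Nat.ltb_lt in E | apply Nat.ltb_ge in E]; try (exfalso; lia)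
  | |- context [(?a =? ?b)%nat] => let E := fresh "E" in destruct (a =? b)%nat eqn:E;
       [apply Nat.eqb_eq in E | apply Nat.eqb_neq in E]; try (exfalso; lia)
  | |- context [(?a <=? ?b)%nat] => let E := fresh "E" in destruct (a <=? b)%nat eqn:E;
       [apply Nat.leb_le in E | apply Nat.leb_gt in E]; try (exfalso; lia)
  | H : context [(?a <? ?b)%nat] |- _ => let E := fresh "E" in destruct (a <? b)%nat eqn:E;
       [apply Nat.ltb_lt in E | apply Nat.ltb_ge in E]; try (exfalso; lia)
  | H : context [(?a =? ?b)%nat] |- _ => let E := fresh "E" in destruct (a =? b)%nat eqn:E;
       [apply Nat.eqb_eq in E | apply Nat.eqb_neq in E]; try (exfalso; lia)
  | H : context [(?a <=? ?b)%nat] |- _ => let E := fresh "E" in destruct (a <=? b)%nat eqn:E;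
       [apply Nat.leb_le in E | apply Nat.leb_gt in E]; try (exfalso; lia)
  | |- context [nth ?i ?a false] => destruct (nth i a false)
  end.
Ltac crush := repeat (dcmp; cbn [andb orb negb move_eqb] in *; try discriminate);
  try reflexivity; try lra; try lia.

Definition detf (et : nat) (mt : move) (a : activation) (m : move) : R :=
  if nth et a false then (if move_eqb m mt then 1 else 0) else (if move_eqb m Wait then 1 else 0).

Section Upper.
Variables (L k e : nat) (p : R).
Hypothesis hk0 : (0 < k)%nat.
Hypothesis hkL : (k < L)%nat.
Hypothesis he : (e < L)%nat.
Hypothesis hp : 0 < p <= 1.

Definition Mf (x : nat) (tr : nat -> bool) : nat :=
  if (e <? k)%nat then (if ((k <? x)%nat && negb (tr (pred L)))%bool then (2 * L - x - e)%nat else (x - e)%nat)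
  else (if ((x <? k)%nat && negb (tr 0%nat))%bool then (x + e + 1)%nat else (e + 1 - x)%nat).

Definition InvS (x : nat) (tr : nat -> bool) : Prop :=
  exists a b, (forall y, tr y = ((a <=? y) && (y <? b))%nat) /\
   (a <= k <= b)%nat /\ (b <= L)%nat /\ (x <= L)%nat /\
   ((a = k /\ b = k /\ x = k) \/ (x = a /\ a < k /\ (b = k \/ b = L)) \/
    (a = 0 /\ x <= k /\ (b = k \/ b = L)) \/ (x = b /\ k < b /\ (a = k \/ a = 0)) \/
    (b = L /\ k <= x /\ (a = k \/ a = 0)))%nat.

Definition tr_after (x : nat) (tr : nat -> bool) (m : move) : nat -> bool :=
  fun y => (tr y || hits x m y)%bool.


Lemma c2_det a b tr (Htr : forall y, tr y = ((a <=? y) && (y <? b))%nat) :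
  (0 < a)%nat -> (a < k)%nat -> (b = k \/ b = L) -> (a <= k <= b)%nat -> (b <= L)%nat -> forall a0 m, dfsS L k a tr a0 m = detf (pred a) Left a0 m.
Proof. intros C0 C1 C2 C3 C4. intros a0 m. unfold dfsS, detf. rewrite !Htr. destruct m; crush. Qed.

Lemma c2_inv a b tr (Htr : forall y, tr y = ((a <=? y) && (y <? b))%nat) :
  (0 < a)%nat -> (a < k)%nat -> (b = k \/ b = L) -> (a <= k <= b)%nat -> (b <= L)%nat -> InvS (newpos a Left) (tr_after a tr Left).
Proof. intros C0 C1 C2 C3 C4. exists (pred a), b. unfold tr_after. split; [intros y; rewrite Htr, hits_L; crush|]. simpl newpos. lia. Qed.

Lemma c2_nr a b tr (Htr : forall y, tr y = ((a <=? y) && (y <? b))%nat) :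
  (0 < a)%nat -> (a < k)%nat -> (b = k \/ b = L) -> (a <= k <= b)%nat -> (b <= L)%nat -> (tr (pred k) || tr k)%bool = true.
Proof. intros C0 C1 C2 C3 C4. rewrite !Htr. crush. Qed.

Lemma c2_mf a b tr (Htr : forall y, tr y = ((a <=? y) && (y <? b))%nat) :
  (0 < a)%nat -> (a < k)%nat -> (b = k \/ b = L) -> (a <= k <= b)%nat -> (b <= L)%nat -> (tr e = false -> (1 <= Mf a tr)%nat /\
        (tr_after a tr Left e = false -> (Mf (newpos a Left) (tr_after a tr Left) + 1 <= Mf a tr)%nat)).
Proof. intros C0 C1 C2 C3 C4. unfold tr_after, Mf. rewrite !Htr, ?hits_L. simpl newpos. intros G1; split; [|intros G2]; crush. Qed.

Lemma c3_det x b tr (Htr : forall y, tr y = ((0%nat <=? y) && (y <? b))%nat) :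
  (x < k)%nat -> (b = k \/ b = L) -> (k <= b)%nat -> (b <= L)%nat -> forall a0 m, dfsS L k x tr a0 m = detf x Right a0 m.
Proof. intros C0 C1 C2 C3. intros a0 m. unfold dfsS, detf. rewrite !Htr. destruct m; crush. Qed.

Lemma c3_inv x b tr (Htr : forall y, tr y = ((0%nat <=? y) && (y <? b))%nat) :
  (x < k)%nat -> (b = k \/ b = L) -> (k <= b)%nat -> (b <= L)%nat -> InvS (newpos x Right) (tr_after x tr Right).
Proof. intros C0 C1 C2 C3. exists 0%nat, b. unfold tr_after. split; [intros y; rewrite Htr, hits_R; crush|]. simpl newpos. lia. Qed.

Lemma c3_nr x b tr (Htr : forall y, tr y = ((0%nat <=? y) && (y <? b))%nat) :
  (x < k)%nat -> (b = k \/ b = L) -> (k <= b)%nat -> (b <= L)%nat -> (tr (pred k) || tr k)%bool = true.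
Proof. intros C0 C1 C2 C3. rewrite !Htr. crush. Qed.

Lemma c3_mf x b tr (Htr : forall y, tr y = ((0%nat <=? y) && (y <? b))%nat) :
  (x < k)%nat -> (b = k \/ b = L) -> (k <= b)%nat -> (b <= L)%nat -> (tr e = false -> (1 <= Mf x tr)%nat /\
        (tr_after x tr Right e = false -> (Mf (newpos x Right) (tr_after x tr Right) + 1 <= Mf x tr)%nat)).
Proof. intros C0 C1 C2 C3. unfold tr_after, Mf. rewrite !Htr, ?hits_R. simpl newpos. intros G1; split; [|intros G2]; crush. Qed.

Lemma c4_det  tr (Htr : forall y, tr y = ((0%nat <=? y) && (y <? k))%nat) :
  forall a0 m, dfsS L k k tr a0 m = detf k Right a0 m.
Proof. intros a0 m. unfold dfsS, detf. rewrite !Htr. destruct m; crush. Qed.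

Lemma c4_inv  tr (Htr : forall y, tr y = ((0%nat <=? y) && (y <? k))%nat) :
  InvS (newpos k Right) (tr_after k tr Right).
Proof. exists 0%nat, (S k). unfold tr_after. split; [intros y; rewrite Htr, hits_R; crush|]. simpl newpos. lia. Qed.

Lemma c4_nr  tr (Htr : forall y, tr y = ((0%nat <=? y) && (y <? k))%nat) :
  (tr (pred k) || tr k)%bool = true.
Proof. rewrite !Htr. crush. Qed.

Lemma c4_mf  tr (Htr : forall y, tr y = ((0%nat <=? y) && (y <? k))%nat) :
  (tr e = false -> (1 <= Mf k tr)%nat /\
        (tr_after k tr Right e = false -> (Mf (newpos k Right) (tr_after k tr Right) + 1 <= Mf k tr)%nat)).
Proof. unfold tr_after, Mf. rewrite !Htr, ?hits_R. simpl newpos. intros G1; split; [|intros G2]; crush. Qed.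

Lemma c6_det a b tr (Htr : forall y, tr y = ((a <=? y) && (y <? b))%nat) :
  (k < b)%nat -> (b < L)%nat -> (a = k \/ a = 0)%nat -> forall a0 m, dfsS L k b tr a0 m = detf b Right a0 m.
Proof. intros C0 C1 C2. intros a0 m. unfold dfsS, detf. rewrite !Htr. destruct m; crush. Qed.

Lemma c6_inv a b tr (Htr : forall y, tr y = ((a <=? y) && (y <? b))%nat) :
  (k < b)%nat -> (b < L)%nat -> (a = k \/ a = 0)%nat -> InvS (newpos b Right) (tr_after b tr Right).
Proof. intros C0 C1 C2. exists a, (S b). unfold tr_after. split; [intros y; rewrite Htr, hits_R; crush|]. simpl newpos. lia. Qed.

Lemma c6_nr a b tr (Htr : forall y, tr y = ((a <=? y) && (y <? b))%nat) :
  (k < b)%nat -> (b < L)%nat -> (a = k \/ a = 0)%nat -> (tr (pred k) || tr k)%bool = true.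
Proof. intros C0 C1 C2. rewrite !Htr. crush. Qed.

Lemma c6_mf a b tr (Htr : forall y, tr y = ((a <=? y) && (y <? b))%nat) :
  (k < b)%nat -> (b < L)%nat -> (a = k \/ a = 0)%nat -> (tr e = false -> (1 <= Mf b tr)%nat /\
        (tr_after b tr Right e = false -> (Mf (newpos b Right) (tr_after b tr Right) + 1 <= Mf b tr)%nat)).
Proof. intros C0 C1 C2. unfold tr_after, Mf. rewrite !Htr, ?hits_R. simpl newpos. intros G1; split; [|intros G2]; crush. Qed.

Lemma c7_det x a tr (Htr : forall y, tr y = ((a <=? y) && (y <? L))%nat) :
  (k < x)%nat -> (x <= L)%nat -> (a = k \/ a = 0)%nat -> forall a0 m, dfsS L k x tr a0 m = detf (pred x) Left a0 m.
Proof. intros C0 C1 C2. intros a0 m. unfold dfsS, detf. rewrite !Htr. destruct m; crush. Qed.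

Lemma c7_inv x a tr (Htr : forall y, tr y = ((a <=? y) && (y <? L))%nat) :
  (k < x)%nat -> (x <= L)%nat -> (a = k \/ a = 0)%nat -> InvS (newpos x Left) (tr_after x tr Left).
Proof. intros C0 C1 C2. exists a, L. unfold tr_after. split; [intros y; rewrite Htr, hits_L; crush|]. simpl newpos. lia. Qed.

Lemma c7_nr x a tr (Htr : forall y, tr y = ((a <=? y) && (y <? L))%nat) :
  (k < x)%nat -> (x <= L)%nat -> (a = k \/ a = 0)%nat -> (tr (pred k) || tr k)%bool = true.
Proof. intros C0 C1 C2. rewrite !Htr. crush. Qed.

Lemma c7_mf x a tr (Htr : forall y, tr y = ((a <=? y) && (y <? L))%nat) :
  (k < x)%nat -> (x <= L)%nat -> (a = k \/ a = 0)%nat -> (tr e = false -> (1 <= Mf x tr)%nat /\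
        (tr_after x tr Left e = false -> (Mf (newpos x Left) (tr_after x tr Left) + 1 <= Mf x tr)%nat)).
Proof. intros C0 C1 C2. unfold tr_after, Mf. rewrite !Htr, ?hits_L. simpl newpos. intros G1; split; [|intros G2]; crush. Qed.

Lemma c8_det  tr (Htr : forall y, tr y = ((k <=? y) && (y <? L))%nat) :
  forall a0 m, dfsS L k k tr a0 m = detf (pred k) Left a0 m.
Proof. intros a0 m. unfold dfsS, detf. rewrite !Htr. destruct m; crush. Qed.

Lemma c8_inv  tr (Htr : forall y, tr y = ((k <=? y) && (y <? L))%nat) :
  InvS (newpos k Left) (tr_after k tr Left).
Proof. exists (pred k), L. unfold tr_after. split; [intros y; rewrite Htr, hits_L; crush|]. simpl newpos. lia. Qed.

Lemma c8_nr  tr (Htr : forall y, tr y = ((k <=? y) && (y <? L))%nat) :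
  (tr (pred k) || tr k)%bool = true.
Proof. rewrite !Htr. crush. Qed.

Lemma c8_mf  tr (Htr : forall y, tr y = ((k <=? y) && (y <? L))%nat) :
  (tr e = false -> (1 <= Mf k tr)%nat /\
        (tr_after k tr Left e = false -> (Mf (newpos k Left) (tr_after k tr Left) + 1 <= Mf k tr)%nat)).
Proof. unfold tr_after, Mf. rewrite !Htr, ?hits_L. simpl newpos. intros G1; split; [|intros G2]; crush. Qed.

Lemma c5_det tr (Htr : forall y, tr y = ((0 <=? y) && (y <? L))%nat) :
  forall a0 m, dfsS L k k tr a0 m = if move_eqb m Wait then 1 else 0.
Proof. intros a0 m. unfold dfsS. rewrite !Htr. destruct m; crush. Qed.

Lemma c5_tr tr (Htr : forall y, tr y = ((0 <=? y) && (y <? L))%nat) : tr e = true.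
Proof. rewrite Htr. crush. Qed.

Lemma c1_tr tr (Htr : forall y, tr y = ((k <=? y) && (y <? k))%nat) : forall y, tr y = false.
Proof. intros y. rewrite Htr. crush. Qed.

Lemma classify x tr : InvS x tr ->
  (x = k /\ forall y, tr y = false) \/
  ((forall a0 m, dfsS L k x tr a0 m = if move_eqb m Wait then 1 else 0) /\ tr e = true) \/
  (exists mt et, mt <> Wait /\ (et < L)%nat /\
     (forall a0 m, dfsS L k x tr a0 m = detf et mt a0 m) /\
     InvS (newpos x mt) (tr_after x tr mt) /\
     (tr (pred k) || tr k)%bool = true /\
     (tr e = false -> (1 <= Mf x tr)%nat /\
        (tr_after x tr mt e = false -> (Mf (newpos x mt) (tr_after x tr mt) + 1 <= Mf x tr)%nat))).
Proof.
  intros [a [b [Htr [Hab [HbL [HxL Hc]]]]]].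
  assert (C : ((a = k /\ b = k /\ x = k) \/
              (x = a /\ 0 < a /\ a < k /\ (b = k \/ b = L)) \/
              (x < k /\ a = 0 /\ (b = k \/ b = L)) \/
              (x = k /\ a = 0 /\ b = k) \/
              (x = k /\ a = 0 /\ b = L) \/
              (x = b /\ k < b /\ b < L /\ (a = k \/ a = 0)) \/
              (k < x /\ b = L /\ (a = k \/ a = 0)) \/
              (x = k /\ a = k /\ b = L))%nat).
  { destruct Hc as [H|[H|[H|[H|H]]]].
    - left; lia.
    - destruct H as [H1 [H2 H3]]. destruct (Nat.eq_dec a 0).
      + right; right; left. split; [lia|split; auto].
      + right; left. split; auto. split; [lia|split; auto].
    - destruct H as [H1 [H2 H3]]. destruct (Nat.lt_ge_cases x k).
      + right; right; left. split; auto.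
      + destruct H3 as [H3|H3].
        * do 3 right; left; lia.
        * do 4 right; left; lia.
    - destruct H as [H1 [H2 H3]]. destruct (Nat.lt_ge_cases b L).
      + do 5 right; left. split; auto.
      + do 6 right; left. split; [lia|split; [lia|auto]].
    - destruct H as [H1 [H2 H3]]. destruct (Nat.eq_dec x k).
      + destruct H3 as [H3|H3].
        * do 7 right; lia.
        * do 4 right; left; lia.
      + do 6 right; left. split; [lia|split; auto]. }
  clear Hc.
  destruct C as [C|[C|[C|[C|[C|[C|[C|C]]]]]]].
  - left. destruct C as [-> [-> ->]]. split; auto. apply c1_tr; auto.
  - right; right. exists Left, (pred x). destruct C as [-> [C1 [C2 C3]]].
    split; [discriminate|]. split; [lia|].
    split; [apply (c2_det a b); auto|]. split; [apply (c2_inv a b); auto; lia|].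
    split; [apply (c2_nr a b); auto; lia|apply (c2_mf a b); auto; lia].
  - right; right. exists Right, x. destruct C as [C1 [-> C3]].
    split; [discriminate|]. split; [lia|].
    split; [apply (c3_det x b); auto; lia|]. split; [apply (c3_inv x b); auto; lia|].
    split; [apply (c3_nr x b); auto; lia|apply (c3_mf x b); auto; lia].
  - right; right. exists Right, k. destruct C as [-> [-> ->]].
    split; [discriminate|]. split; [lia|].
    split; [apply c4_det; auto|]. split; [apply c4_inv; auto|].
    split; [apply c4_nr; auto|apply c4_mf; auto].
  - right; left. destruct C as [-> [-> ->]]. split; [apply c5_det; auto|apply c5_tr; auto].
  - right; right. exists Right, x. destruct C as [-> [C1 [C2 C3]]].
    split; [discriminate|]. split; [lia|].
    split; [apply (c6_det a b); auto|]. split; [apply (c6_inv a b); auto|].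
    split; [apply (c6_nr a b); auto|apply (c6_mf a b); auto].
  - right; right. exists Left, (pred x). destruct C as [C1 [-> C3]].
    split; [discriminate|]. split; [lia|].
    split; [apply (c7_det x a); auto|]. split; [apply (c7_inv x a); auto|].
    split; [apply (c7_nr x a); auto|apply (c7_mf x a); auto].
  - right; right. exists Left, (pred k). destruct C as [-> [-> ->]].
    split; [discriminate|]. split; [lia|].
    split; [apply c8_det; auto|]. split; [apply c8_inv; auto|].
    split; [apply c8_nr; auto|apply c8_mf; auto].
Qed.
End Upper.

Section Lower.
Variables (L k : nat) (p : R).
Hypothesis hk0 : (0 < k)%nat.
Hypothesis hkL : (k < L)%nat.
Hypothesis hp : 0 < p <= 1.

Let u := / p.
Let Q := / (1 - (1 - p) ^ 2).

Definition D1 x := if (x <? L)%nat then (L - x)%nat else 1%nat.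
Definition D0 x := if (x =? 0)%nat then 1%nat else Nat.min x L.
Definition NN x := if (x <? k)%nat then (x + (L - k))%nat else (L - Nat.min x L + k)%nat.

Definition phi (x : nat) (f0 f1 : bool) : R :=
  match f0, f1 with
  | true, true => 0
  | true, false => u * INR ((L - k) * D1 x)
  | false, true => u * INR (k * D0 x)
  | false, false => if (x =? k)%nat then u * INR (L * (L - 1)) + INR L * Q
                    else u * INR (L * NN x)
  end.

Definition tow x := if (x <? k)%nat then (if (x =? 0)%nat then Right else Left)
                    else (if (x <? L)%nat then Right else Left).

Definition beta (x : nat) (f0 f1 : bool) (m : move) : R :=
  match f0, f1 with
  | true, true => 0
  | true, false => if move_eqb m (if (x <? L)%nat then Right else Left) then u * INR (L - k) else 0
  | false, true => if move_eqb m (if (x =? 0)%nat then Right else Left) then u * INR k else 0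
  | false, false => if (x =? k)%nat then (if move_eqb m Wait then 0 else INR L * Q)
                    else if move_eqb m (tow x) then u * INR L else 0
  end.

Lemma u_pos : 0 < u. Proof. unfold u. apply Rinv_0_lt_compat; lra. Qed.
Lemma Q_pos : 0 < Q. Proof. unfold Q. apply Rinv_0_lt_compat. nra. Qed.

Lemma fa (A B C : nat) : (B <= A + C)%nat -> u * INR B - u * INR C <= u * INR A.
Proof. intros H. apply le_INR in H. rewrite plus_INR in H. pose proof u_pos. nra. Qed.
Lemma fb (A B : nat) : (B <= A)%nat -> u * INR B - 0 <= u * INR A.
Proof. intros H. apply le_INR in H. pose proof u_pos. nra. Qed.
Lemma fc (B C : nat) : (B <= C)%nat -> u * INR B - u * INR C <= 0.
Proof. intros H. apply le_INR in H. pose proof u_pos. nra. Qed.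
Lemma fd (A B : nat) : (B <= A)%nat -> u * INR B + INR L * Q - INR L * Q <= u * INR A.
Proof. intros H. apply le_INR in H. pose proof u_pos. nra. Qed.
Lemma fe (A B C : nat) : (A <= B + C)%nat -> u * INR A - u * INR C <= u * INR B + INR L * Q.
Proof. intros H. apply le_INR in H. rewrite plus_INR in H. pose proof u_pos. pose proof Q_pos.
  assert (0 <= INR L) by apply pos_INR. nra. Qed.
Lemma ff (A B : nat) : (A <= B)%nat -> u * INR A - 0 <= u * INR B + INR L * Q.
Proof. intros H. apply le_INR in H. pose proof u_pos. pose proof Q_pos.
  assert (0 <= INR L) by apply pos_INR. nra. Qed.

Ltac destr_nat :=
  repeat match goal with
  | |- context [(?a <? ?b)%nat] => let E := fresh "E" in destruct (a <? b)%nat eqn:E;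
       [apply Nat.ltb_lt in E | apply Nat.ltb_ge in E]
  | |- context [(?a =? ?b)%nat] => let E := fresh "E" in destruct (a =? b)%nat eqn:E;
       [apply Nat.eqb_eq in E | apply Nat.eqb_neq in E]
  end.

Lemma phi_step x f0 f1 m :
  (m = Left -> (0 < x)%nat /\ (pred x < L)%nat) -> (m = Right -> (x < L)%nat) ->
  phi x f0 f1 - beta x f0 f1 m <= phi (newpos x m) (f0 || hits x m 0) (f1 || hits x m (pred L)).
Proof.
  intros HL HR.
  destruct m; [clear HL HR | specialize (HL eq_refl); clear HR | specialize (HR eq_refl); clear HL];
  rewrite ?hits_W, ?hits_L, ?hits_R; destruct f0, f1; cbn [orb];
  unfold phi, beta, tow, D0, D1, NN, newpos; destr_nat; cbn [move_eqb andb orb negb];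
  try lra; try (exfalso; lia);
  first [ apply fa | apply fb | apply fc | apply fd | apply fe | apply ff ]; nia.
Qed.

Lemma legal_probdist s : legal L k s -> probdist s.
Proof. intros H h a. destruct (H h a) as [H1 [H2 _]]. split; auto. Qed.

Definition SB (s : strategy) h a (B : move -> R) :=
  s h a Wait * B Wait + (s h a Left * B Left + (s h a Right * B Right + 0)).

Definition Phi (h : history) : R := phi (pos_of k h) (traversed k h 0) (traversed k h (pred L)).
Definition ct (h : history) : R := INR k * gE k 0 h + INR (L - k) * gE k (pred L) h.

Lemma step_sum s h (P0 : R) (B : move -> R) (F : history -> R) : probdist s ->
  (forall a m, s h a m <> 0 -> P0 - B m <= F (h ++ [(a, m)])) ->
  P0 - sumR (map (fun a => actprob p a * SB s h a B) (all_acts L)) <= Ex L p s 1 h F.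
Proof.
  intros Hs H. simpl.
  rewrite <- (sum_acts_const p L P0) at 1.
  assert (E : forall l, sumR (map (fun a => actprob p a * P0) l) - sumR (map (fun a => actprob p a * SB s h a B) l)
     = sumR (map (fun a => actprob p a * (P0 - SB s h a B)) l)).
  { induction l; simpl; [ring|]. rewrite <- IHl. ring. }
  rewrite E. apply sumR_map_le. intros a _. apply Rmult_le_compat_l. apply actprob_nonneg; lra.
  destruct (Hs h a) as [Hn Hsum]. unfold SB.
  assert (forall m, s h a m * (P0 - B m) <= s h a m * F (h ++ [(a,m)])).
  { intros m. destruct (Req_dec (s h a m) 0) as [Z|Z]. rewrite Z; lra.
    apply Rmult_le_compat_l; auto. }
  pose proof (H0 Wait); pose proof (H0 Left); pose proof (H0 Right).
  replace P0 with ((s h a Wait + s h a Left + s h a Right) * P0) by (rewrite Hsum; ring).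
  simpl. lra.
Qed.

Lemma s_le_1 s h a m : probdist s -> s h a m <= 1.
Proof. intros Hs. destruct (Hs h a) as [Hn Hsum]. pose proof (Hn Wait); pose proof (Hn Left);
  pose proof (Hn Right). destruct m; lra. Qed.

Lemma bound_nonroot s h mt g : legal L k s -> mt <> Wait -> 0 <= g ->
  sumR (map (fun a => actprob p a * SB s h a (fun m => if move_eqb m mt then g else 0)) (all_acts L)) <= g * p.
Proof.
  intros Hl Hmt Hg. pose proof (legal_probdist s Hl) as Hs.
  set (e := match mt with Left => pred (pos_of k h) | _ => pos_of k h end).
  eapply Rle_trans with (sumR (map (fun a => actprob p a * (g * indb (nth e a false))) (all_acts L))).
  - apply sumR_map_le. intros a _. apply Rmult_le_compat_l. apply actprob_nonneg; lra.
    destruct (Hl h a) as [Hn [Hsum [HLf HRt]]]. unfold SB.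
    assert (Hm : s h a mt <= indb (nth e a false)).
    { destruct (nth e a false) eqn:En; unfold indb. apply s_le_1; auto.
      destruct mt; [congruence| |].
      - destruct (Req_dec (s h a Left) 0) as [Z|Z]. lra. destruct (HLf Z) as [_ [_ X]]. subst e. simpl in En. congruence.
      - destruct (Req_dec (s h a Right) 0) as [Z|Z]. lra. destruct (HRt Z) as [_ X]. subst e. simpl in En. congruence. }
    destruct mt; [congruence| |]; simpl; nra.
  - rewrite (sumR_map_ext _ (fun a => g * (actprob p a * indb (nth e a false)))) by (intros; ring).
    rewrite sumR_map_scal. pose proof (sum_acts_nth_le p L e (conj (Rlt_le _ _ (proj1 hp)) (proj2 hp))). nra.
Qed.

Lemma bound_root s h g : legal L k s -> pos_of k h = k -> 0 <= g ->
  sumR (map (fun a => actprob p a * SB s h a (fun m => if move_eqb m Wait then 0 else g)) (all_acts L))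
   <= g * (1 - (1 - p) ^ 2).
Proof.
  intros Hl Hpos Hg. pose proof (legal_probdist s Hl) as Hs.
  eapply Rle_trans with (sumR (map (fun a => actprob p a * (g * indb (nth (pred k) a false || nth k a false))) (all_acts L))).
  - apply sumR_map_le. intros a _. apply Rmult_le_compat_l. apply actprob_nonneg; lra.
    destruct (Hl h a) as [Hn [Hsum [HLf HRt]]]. unfold SB. simpl. rewrite Hpos in *.
    pose proof (Hn Wait).
    destruct (nth (pred k) a false || nth k a false) eqn:En; unfold indb.
    + pose proof (Hn Left); pose proof (Hn Right). nra.
    + apply orb_false_iff in En. destruct En as [E1 E2].
      destruct (Req_dec (s h a Left) 0) as [Z|Z]; [|destruct (HLf Z) as [_ [_ X]]; congruence].
      destruct (Req_dec (s h a Right) 0) as [Z'|Z']; [|destruct (HRt Z') as [_ X]; congruence].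
      rewrite Z, Z'. lra.
  - rewrite (sumR_map_ext _ (fun a => g * (actprob p a * indb (nth (pred k) a false || nth k a false)))) by (intros; ring).
    rewrite sumR_map_scal, sum_acts_or by lia. lra.
Qed.

Lemma up_1 : u * p = 1. Proof. unfold u. field. lra. Qed.
Lemma Q_1 : Q * (1 - (1 - p) ^ 2) = 1. Proof. unfold Q. field. nra. Qed.

Lemma Phi_bellman s : legal L k s -> forall h, Phi h <= ct h + Ex L p s 1 h Phi.
Proof.
  intros Hl h. pose proof (legal_probdist s Hl) as Hs.
  set (x := pos_of k h). set (f0 := traversed k h 0). set (f1 := traversed k h (pred L)).
  assert (Hstep : Phi h - sumR (map (fun a => actprob p a * SB s h a (beta x f0 f1)) (all_acts L)) <= Ex L p s 1 h Phi).
  { apply step_sum; auto. intros a m Hm. unfold Phi. rewrite pos_of_snoc, !traversed_snoc.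
    apply phi_step.
    - intros ->. destruct (Hl h a) as [_ [_ [X _]]]. destruct (X Hm) as [? [? _]]; auto.
    - intros ->. destruct (Hl h a) as [_ [_ [_ X]]]. destruct (X Hm) as [? _]; auto. }
  assert (Hb : sumR (map (fun a => actprob p a * SB s h a (beta x f0 f1)) (all_acts L)) <= ct h).
  { pose proof up_1. pose proof Q_1. pose proof u_pos. pose proof Q_pos.
    assert (HLk : INR k + INR (L - k) = INR L) by (rewrite <- plus_INR; f_equal; lia).
    pose proof (pos_INR k). pose proof (pos_INR (L - k)).
    unfold ct, gE. fold f0 f1. unfold beta. destruct f0, f1.
    - rewrite (sumR_map_ext _ (fun a => actprob p a * 0)). rewrite sum_acts_const; lra.
      intros a _. unfold SB. f_equal. ring.
    - eapply Rle_trans. apply bound_nonroot; auto. destruct (x <? L)%nat; discriminate.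
      apply Rmult_le_pos; lra. nra.
    - eapply Rle_trans. apply bound_nonroot; auto. destruct (x =? 0)%nat; discriminate.
      apply Rmult_le_pos; lra. nra.
    - destruct (x =? k)%nat eqn:Ex.
      + apply Nat.eqb_eq in Ex. eapply Rle_trans. apply bound_root; auto.
        pose proof (pos_INR L); nra. nra.
      + eapply Rle_trans. apply bound_nonroot; auto. unfold tow.
        destruct (x <? k)%nat; [destruct (x =? 0)%nat| destruct (x <? L)%nat]; discriminate.
        pose proof (pos_INR L); nra. nra. }
  lra.
Qed.


Lemma Q_le_u : Q <= u.
Proof. unfold Q, u. apply Rinv_le_contravar. lra. nra. Qed.

Lemma INR_le_mul (a b c : nat) : (a <= b * c)%nat -> INR a <= INR b * INR c.
Proof. intros H. rewrite <- mult_INR. apply le_INR; auto. Qed.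

Lemma Phi_le_ct h : Phi h <= u * INR L * ct h.
Proof.
  pose proof u_pos. pose proof Q_pos. pose proof Q_le_u.
  assert (HLk : INR k + INR (L - k) = INR L) by (rewrite <- plus_INR; f_equal; lia).
  unfold Phi, ct, gE, phi. set (x := pos_of k h).
  destruct (traversed k h 0), (traversed k h (pred L)).
  - nra.
  - assert (INR ((L - k) * D1 x) <= INR L * INR (L - k)).
    { apply INR_le_mul. unfold D1. destruct (x <? L)%nat eqn:E; [apply Nat.ltb_lt in E|]; nia. }
    nra.
  - assert (INR (k * D0 x) <= INR L * INR k).
    { apply INR_le_mul. unfold D0. destruct (x =? 0)%nat; nia. }
    nra.
  - destruct (x =? k)%nat.
    + assert (INR (L * (L - 1)) + INR L <= INR L * INR L).
      { rewrite <- plus_INR. apply INR_le_mul. nia. }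
      pose proof (pos_INR L).
      assert (INR L * Q <= INR L * u) by (apply Rmult_le_compat_l; lra).
      assert (u * (INR (L * (L - 1)) + INR L) <= u * (INR L * INR L)) by (apply Rmult_le_compat_l; lra).
      replace (INR k * 1 + INR (L - k) * 1) with (INR L) by lra. nra.
    + assert (INR (L * NN x) <= INR L * INR L).
      { apply INR_le_mul. unfold NN. destruct (x <? k)%nat eqn:E; [apply Nat.ltb_lt in E|apply Nat.ltb_ge in E]; nia. }
      replace (INR k * 1 + INR (L - k) * 1) with (INR L) by lra.
      assert (u * INR (L * NN x) <= u * (INR L * INR L)) by (apply Rmult_le_compat_l; lra). nra.
Qed.

Lemma Phi_nil : Phi [] = INR L * game_value L p.
Proof.
  unfold Phi, phi. rewrite pos_of_nil, !traversed_nil, Nat.eqb_refl.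
  unfold game_value. rewrite mult_INR, minus_INR by lia. unfold u, Q. simpl INR. field.
  split; [lra|]. apply Rgt_not_eq. nra.
Qed.

Lemma hider_eq s : probdist s -> forall N,
  INR L * hider_partial L k p s N = sumN (S N) (fun t => Ex L p s t [] ct).
Proof.
  intros Hs N. unfold hider_partial. rewrite sumN_f_R0.
  assert (HL : INR L <> 0) by (apply not_0_INR; lia).
  generalize (S N). intros n. revert N. generalize (fun t:nat => t). 
  intros _ _.
  assert (forall n (F G : nat -> R), (forall t, G t = INR L * F t) -> sumN n G = INR L * sumN n F).
  { induction n0; intros F G HG; simpl. ring. rewrite HG, (IHn0 (fun t => F (S t))). ring. intros; apply HG. }
  symmetry. apply H. intros t. unfold ct.
  rewrite Ex_plus, !Ex_scal, !tail_prob_Ex. field. auto.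
Qed.

Theorem lower_bound s : legal L k s ->
  forall l, Un_cv (hider_partial L k p s) l -> game_value L p <= l.
Proof.
  intros Hl l Hcv. pose proof (legal_probdist s Hl) as Hs.
  assert (Hp' : 0 <= p <= 1) by lra.
  set (F := hider_partial L k p s).
  assert (HL : 0 < INR L) by (apply lt_0_INR; lia).
  assert (Key : forall N, game_value L p <= F N + u * INR L * (F (S N) - F N)).
  { intros N.
    pose proof (telescope_lower L p s Hp' Hs Phi ct (Phi_bellman s Hl) (S N) []) as T.
    rewrite Phi_nil, <- hider_eq in T by auto.
    assert (Ex L p s (S N) [] Phi <= u * INR L * Ex L p s (S N) [] ct).
    { rewrite <- Ex_scal. apply Ex_mono; auto. intros; apply Phi_le_ct. }
    assert (E : Ex L p s (S N) [] ct = INR L * F (S N) - INR L * F N).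
    { unfold F. rewrite !hider_eq by auto. rewrite (sumN_S (S N)). ring. }
    rewrite E in H. fold F in T.
    apply Rmult_le_reg_l with (INR L); auto. nra. }
  assert (C : Un_cv (fun N => F N + u * INR L * (F (S N) - F N)) (l + u * INR L * (l - l))).
  { apply CV_plus; auto. apply CV_mult. intros e He; exists O; intros; rewrite R_dist_eq; auto.
    apply CV_minus; auto. apply (CV_shift' F 1 l) in Hcv. eapply Un_cv_ext; [|exact Hcv].
    intros n; simpl; rewrite Nat.add_1_r; auto. }
  replace l with (l + u * INR L * (l - l)) by ring.
  eapply Rle_cv_lim; [exact Key| |exact C].
  intros e He; exists O; intros; rewrite R_dist_eq; auto.
Qed.

End Lower.

Section Upper2.
Variables (L k e : nat) (p : R).
Hypothesis hk0 : (0 < k)%nat.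
Hypothesis hkL : (k < L)%nat.
Hypothesis he : (e < L)%nat.
Hypothesis hp : 0 < p <= 1.

Let u := / p.
Let Q := / (1 - (1 - p) ^ 2).
Lemma u_pos' : 0 < u. Proof. unfold u. apply Rinv_0_lt_compat; lra. Qed.
Lemma Q_pos' : 0 < Q. Proof. unfold Q. apply Rinv_0_lt_compat. nra. Qed.
Lemma up_1' : u * p = 1. Proof. unfold u. field. lra. Qed.
Lemma Q_1' : Q * (1 - (1 - p) ^ 2) = 1. Proof. unfold Q. field. apply Rgt_not_eq. nra. Qed.

Definition Psi0 : R := Q + u * INR (if (e <? k)%nat then (L - e - 1)%nat else e).

Definition psi (x : nat) (tr : nat -> bool) : R :=
  if tr e then 0 else if (negb (tr (pred k)) && negb (tr k))%bool then Psi0 else u * INR (Mf L k e x tr).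

Definition Psi (h : history) : R := psi (pos_of k h) (traversed k h).
Definition Inv (h : history) : Prop := InvS L k (pos_of k h) (traversed k h).

Lemma Mf_ext x tr1 tr2 : (forall y, tr1 y = tr2 y) -> Mf L k e x tr1 = Mf L k e x tr2.
Proof. intros H. unfold Mf. rewrite !H. reflexivity. Qed.
Lemma psi_ext x tr1 tr2 : (forall y, tr1 y = tr2 y) -> psi x tr1 = psi x tr2.
Proof. intros H. unfold psi. rewrite !H, (Mf_ext x tr1 tr2 H). reflexivity. Qed.
Lemma InvS_ext x tr1 tr2 : (forall y, tr1 y = tr2 y) -> InvS L k x tr1 -> InvS L k x tr2.
Proof. intros H [a [b [Htr R]]]. exists a, b. split; auto. intros y; rewrite <- H; auto. Qed.

Lemma uINR_le (n m : nat) : (n <= m)%nat -> u * INR n <= u * INR m.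
Proof. intros H. apply Rmult_le_compat_l. pose proof u_pos'; lra. apply le_INR; auto. Qed.
Lemma uINR_nonneg (n : nat) : 0 <= u * INR n.
Proof. apply Rmult_le_pos. pose proof u_pos'; lra. apply pos_INR. Qed.

Lemma Psi_snoc h a m : Psi (h ++ [(a, m)]) = psi (newpos (pos_of k h) m) (tr_after (pos_of k h) (traversed k h) m).
Proof. unfold Psi. rewrite pos_of_snoc. apply psi_ext. intros y. apply traversed_snoc. Qed.

Lemma Ex1_Psi h :
  Ex L p (dfs L k) 1 h Psi = sumR (map (fun a => actprob p a *
     (dfsS L k (pos_of k h) (traversed k h) a Wait * psi (newpos (pos_of k h) Wait) (tr_after (pos_of k h) (traversed k h) Wait) +
     (dfsS L k (pos_of k h) (traversed k h) a Left * psi (newpos (pos_of k h) Left) (tr_after (pos_of k h) (traversed k h) Left) +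
     (dfsS L k (pos_of k h) (traversed k h) a Right * psi (newpos (pos_of k h) Right) (tr_after (pos_of k h) (traversed k h) Right) + 0))))
    (all_acts L)).
Proof. simpl. apply sumR_map_ext. intros a _. simpl. rewrite !Psi_snoc. reflexivity. Qed.

Lemma inv_nil : Inv [].
Proof. exists k, k. unfold Inv. rewrite pos_of_nil. split; [|lia]. intros y. rewrite traversed_nil. crush. Qed.

Lemma inv_pres h a0 m : Inv h -> dfs L k h a0 m <> 0 -> Inv (h ++ [(a0, m)]).
Proof.
  unfold Inv. rewrite dfs_S, pos_of_snoc. intros HI Hm.
  apply (InvS_ext _ (tr_after (pos_of k h) (traversed k h) m)); [intros y; symmetry; apply traversed_snoc|].
  set (x := pos_of k h) in *. set (tr := traversed k h) in *. clearbody x tr.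
  assert (Wt : InvS L k (newpos x Wait) (tr_after x tr Wait)).
  { apply (InvS_ext _ tr); auto. intros y; unfold tr_after; rewrite hits_W, orb_false_r; auto. }
  destruct (classify L k e hk0 hkL he x tr HI) as [[-> Hz]|[[Hd _]|[mt [et [Hmt [_ [Hdet [Hinv _]]]]]]]].
  - destruct m; auto.
    + exists (pred k), k. unfold tr_after. split; [intros y; rewrite Hz, hits_L; crush|]. simpl newpos. lia.
    + exists k, (S k). unfold tr_after. split; [intros y; rewrite Hz, hits_R; crush|]. simpl newpos. lia.
  - rewrite Hd in Hm. destruct m; auto; simpl in Hm; lra.
  - rewrite Hdet in Hm. unfold detf in Hm. destruct m; auto; destruct mt; try congruence;
    destruct (nth et a0 false); simpl in Hm; lra.
Qed.


Lemma sumN_ext n : forall F G, (forall t, F t = G t) -> sumN n F = sumN n G.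
Proof. induction n; intros F G H; simpl; auto. rewrite H, (IHn (fun t => F (S t)) (fun t => G (S t))); auto. Qed.

Lemma psi_zero x tr m : tr e = true -> psi (newpos x m) (tr_after x tr m) = 0.
Proof. intros H. unfold psi, tr_after. rewrite H. reflexivity. Qed.

Lemma sum_lin (f : activation -> R) (c1 c2 : R) (g : activation -> R) :
  sumR (map (fun a => actprob p a * (c1 * g a + c2)) (all_acts L)) =
  c1 * sumR (map (fun a => actprob p a * g a) (all_acts L)) + c2.
Proof.
  rewrite (sumR_map_ext _ (fun a => c1 * (actprob p a * g a) + actprob p a * c2)) by (intros; ring).
  rewrite sumR_map_plus, sumR_map_scal, sum_acts_const. ring.
Qed.

Lemma root_dfs tr a : (forall y, tr y = false) ->
  dfsS L k k tr a Wait = 1 - indb (nth (pred k) a false || nth k a false) /\ dfsS L k k tr a Left = indb (nth (pred k) a false) - / 2 * indb (nth (pred k) a false && nth k a false) /\ dfsS L k k tr a Right = indb (nth k a false) - / 2 * indb (nth (pred k) a false && nth k a false).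
Proof.
  intros Hz. unfold dfsS, indb. rewrite !Hz. crush; split; try split; try lra.
Qed.

Lemma root_bellman h : pos_of k h = k -> (forall y, traversed k h y = false) ->
  gE k e h + Ex L p (dfs L k) 1 h Psi <= Psi h.
Proof.
  intros Hx Hz. rewrite Ex1_Psi. unfold gE, Psi. rewrite Hx. rewrite Hz.
  set (tr := traversed k h) in *. clearbody tr.
  pose proof u_pos'. pose proof Q_pos'. pose proof up_1'. pose proof Q_1'.
  set (ALn := if (e <? k)%nat then (k - 1 - e)%nat else (k + e)%nat).
  set (ARn := if (e <? k)%nat then (2 * L - k - 1 - e)%nat else (e - k)%nat).
  set (P0n := if (e <? k)%nat then (L - e - 1)%nat else e).
  assert (HA : INR ALn + INR ARn = 2 * INR P0n).
  { rewrite <- plus_INR. replace 2 with (INR 2) by (simpl; lra). rewrite <- mult_INR. f_equal.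
    unfold ALn, ARn, P0n. destruct (e <? k)%nat eqn:E; [apply Nat.ltb_lt in E|apply Nat.ltb_ge in E]; lia. }
  assert (HAL : psi (newpos k Left) (tr_after k tr Left) <= u * INR ALn).
  { unfold psi, Mf, tr_after, ALn. rewrite !Hz, ?hits_L. simpl newpos.
    crush; first [apply uINR_nonneg | apply uINR_le; lia]. }
  assert (HAR : psi (newpos k Right) (tr_after k tr Right) <= u * INR ARn).
  { unfold psi, Mf, tr_after, ARn. rewrite !Hz, ?hits_R. simpl newpos.
    crush; first [apply uINR_nonneg | apply uINR_le; lia]. }
  assert (HB : psi (newpos k Wait) (tr_after k tr Wait) = Psi0).
  { unfold psi, tr_after. rewrite !Hz, !hits_W. simpl. reflexivity. }
  assert (HP : psi k tr = Psi0). { unfold psi. rewrite !Hz. reflexivity. }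
  rewrite HP.
  set (AL := psi (newpos k Left) (tr_after k tr Left)) in *.
  set (AR := psi (newpos k Right) (tr_after k tr Right)) in *.
  rewrite HB.
  eapply Rle_trans with (1 + sumR (map (fun a => actprob p a *
     ((indb (nth (pred k) a false) - / 2 * indb (nth (pred k) a false && nth k a false)) * (u * INR ALn) +
      (indb (nth k a false) - / 2 * indb (nth (pred k) a false && nth k a false)) * (u * INR ARn) +
      (1 - indb (nth (pred k) a false || nth k a false)) * Psi0)) (all_acts L))).
  - apply Rplus_le_compat_l. apply sumR_map_le. intros a _. apply Rmult_le_compat_l.
    apply actprob_nonneg; lra.
    destruct (root_dfs tr a Hz) as [D1 [D2 D3]]. rewrite D1, D2, D3.
    assert (0 <= indb (nth (pred k) a false) - / 2 * indb (nth (pred k) a false && nth k a false)).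
    { unfold indb. destruct (nth (pred k) a false), (nth k a false); simpl; lra. }
    assert (0 <= indb (nth k a false) - / 2 * indb (nth (pred k) a false && nth k a false)).
    { unfold indb. destruct (nth (pred k) a false), (nth k a false); simpl; lra. }
    assert (X1 : (indb (nth (pred k) a false) - / 2 * indb (nth (pred k) a false && nth k a false)) * AL <=
                 (indb (nth (pred k) a false) - / 2 * indb (nth (pred k) a false && nth k a false)) * (u * INR ALn))
      by (apply Rmult_le_compat_l; auto).
    assert (X2 : (indb (nth k a false) - / 2 * indb (nth (pred k) a false && nth k a false)) * AR <=
                 (indb (nth k a false) - / 2 * indb (nth (pred k) a false && nth k a false)) * (u * INR ARn))
      by (apply Rmult_le_compat_l; auto).
    lra.
  - rewrite (sumR_map_ext _ (fun a => (u * INR ALn) * (actprob p a * indb (nth (pred k) a false)) +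
        ((u * INR ARn) * (actprob p a * indb (nth k a false)) +
        ((- / 2 * (u * INR ALn + u * INR ARn)) * (actprob p a * indb (nth (pred k) a false && nth k a false)) +
        ((- Psi0) * (actprob p a * indb (nth (pred k) a false || nth k a false)) + actprob p a * Psi0)))))
      by (intros; ring).
    rewrite !sumR_map_plus, !sumR_map_scal, sum_acts_nth, sum_acts_nth, sum_acts_and, sum_acts_or, sum_acts_const by lia.
    unfold Psi0. fold P0n.
    assert (E2 : u * INR ALn + u * INR ARn = 2 * (u * INR P0n)) by (rewrite <- Rmult_plus_distr_l, HA; ring).
    rewrite E2.
    assert (u * INR ALn * p + u * INR ARn * p = 2 * (u * INR P0n) * p) by (rewrite <- E2; ring).
    nra.
Qed.

Lemma bellman h : Inv h -> gE k e h + Ex L p (dfs L k) 1 h Psi <= Psi h.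
Proof.
  intros HI. unfold Inv in HI.
  destruct (classify L k e hk0 hkL he _ _ HI) as [[Hx Hz]|[[Hd Te]|[mt [et [Hmt [Het [Hdet [_ [Hnr HM]]]]]]]]].
  - apply root_bellman; auto.
  - rewrite Ex1_Psi. unfold gE, Psi. rewrite Te. rewrite !psi_zero by auto.
    unfold psi. rewrite Te.
    rewrite (sumR_map_ext _ (fun a => actprob p a * 0)) by (intros; ring). rewrite sum_acts_const. lra.
  - rewrite Ex1_Psi. unfold gE, Psi.
    set (x := pos_of k h) in *. set (tr := traversed k h) in *. clearbody x tr.
    destruct (tr e) eqn:Te.
    + rewrite !psi_zero by auto. unfold psi. rewrite Te.
      rewrite (sumR_map_ext _ (fun a => actprob p a * 0)) by (intros; ring). rewrite sum_acts_const. lra.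
    + destruct (HM eq_refl) as [HM1 HM2].
      pose proof u_pos'. pose proof up_1'.
      set (A := psi (newpos x mt) (tr_after x tr mt)).
      set (B := psi x tr).
      assert (HB : B = u * INR (Mf L k e x tr)).
      { unfold B, psi. rewrite Te. destruct (tr (pred k)), (tr k); try discriminate; reflexivity. }
      assert (HW : psi (newpos x Wait) (tr_after x tr Wait) = B).
      { apply psi_ext. intros y. unfold tr_after. rewrite hits_W, orb_false_r. auto. }
      assert (HA : A <= B - u).
      { unfold A. unfold psi at 1. destruct (tr_after x tr mt e) eqn:Ta.
        - rewrite HB. assert (1 <= INR (Mf L k e x tr)) by (apply (le_INR 1); auto). nra.
        - assert (Nn : (negb (tr_after x tr mt (pred k)) && negb (tr_after x tr mt k))%bool = false).
          { unfold tr_after. destruct (tr (pred k)), (tr k); simpl; try discriminate; auto;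
            destruct (hits x mt (pred k)); auto. }
          rewrite Nn, HB. specialize (HM2 eq_refl). apply le_INR in HM2. rewrite plus_INR in HM2.
          simpl in HM2. nra. }
      rewrite (sumR_map_ext _ (fun a => (A - B) * (actprob p a * indb (nth et a false)) + actprob p a * B)).
      * rewrite sumR_map_plus, sumR_map_scal, sum_acts_nth, sum_acts_const by auto. fold B. nra.
      * intros a _. rewrite !Hdet. unfold detf, indb. rewrite HW.
        destruct mt; [congruence| |]; destruct (nth et a false); unfold A; simpl; ring.
Qed.


Lemma psi_nonneg x tr : 0 <= psi x tr.
Proof.
  unfold psi. pose proof Q_pos'. pose proof (uINR_nonneg (if (e <? k)%nat then (L - e - 1)%nat else e)).
  destruct (tr e). lra. destruct (negb (tr (pred k)) && negb (tr k))%bool. unfold Psi0. lra. apply uINR_nonneg.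
Qed.

Lemma Psi_nil : Psi [] = Psi0.
Proof. unfold Psi, psi. rewrite pos_of_nil, !traversed_nil. reflexivity. Qed.

Lemma Psi0_le : Psi0 <= game_value L p.
Proof.
  unfold Psi0, game_value. pose proof u_pos'.
  assert (INR (if (e <? k)%nat then (L - e - 1)%nat else e) <= INR L - 1).
  { replace (INR L - 1) with (INR (L - 1)) by (rewrite minus_INR by lia; simpl; ring). apply le_INR.
    destruct (e <? k)%nat; lia. }
  unfold Q, u in *. unfold Rdiv. rewrite Rmult_1_l.
  assert (/ p * INR (if (e <? k)%nat then (L - e - 1)%nat else e) <= / p * (INR L - 1)) by (apply Rmult_le_compat_l; lra).
  lra.
Qed.

Theorem upper_bound : exists l, Un_cv (exp_partial L k p (dfs L k) e) l /\ l <= game_value L p.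
Proof.
  assert (Hp' : 0 <= p <= 1) by lra.
  assert (Hs : probdist (dfs L k)).
  { intros h a. destruct (dfs_legal L k hk0 hkL h a) as [H1 [H2 _]]. split; auto. }
  assert (Hb : forall N, exp_partial L k p (dfs L k) e N <= game_value L p).
  { intros N. unfold exp_partial. rewrite sumN_f_R0.
    assert (ET : sumN (S N) (fun t => tail_prob L k p (dfs L k) e t) = sumN (S N) (fun t => Ex L p (dfs L k) t [] (gE k e))).
    { apply sumN_ext. intros; apply tail_prob_Ex. }
    rewrite ET.
    pose proof (telescope_upper L p (dfs L k) Hp' Hs Inv Psi (gE k e) inv_pres bellman (S N) [] inv_nil) as T.
    assert (0 <= Ex L p (dfs L k) (S N) [] Psi).
    { rewrite <- (Ex_const L p _ Hs (S N) [] 0). apply Ex_mono; auto. intros; apply psi_nonneg. }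
    rewrite Psi_nil in T. pose proof Psi0_le. lra. }
  assert (Hg : Un_growing (exp_partial L k p (dfs L k) e)).
  { intros n. unfold exp_partial. simpl sum_f_R0. rewrite tail_prob_Ex.
    assert (0 <= Ex L p (dfs L k) (S n) [] (gE k e)).
    { rewrite <- (Ex_const L p _ Hs (S n) [] 0). apply Ex_mono; auto. intros; unfold gE.
      destruct (traversed k h e); lra. }
    lra. }
  assert (Hu : has_ub (exp_partial L k p (dfs L k) e)).
  { exists (game_value L p). intros x [i ->]. apply Hb. }
  destruct (growing_cv _ Hg Hu) as [l Hl].
  exists l. split; auto.
  eapply Rle_cv_lim; [exact Hb| exact Hl |].
  intros eps Heps; exists O; intros; rewrite R_dist_eq; auto.
Qed.

End Upper2.

Theorem mainTheorem12 (L k : nat) (p : R)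
    (hk0 : (0 < k)%nat) (hkL : (k < L)%nat) (hp : 0 < p <= 1) :
  (* the hider's distribution guarantees at least val(p) against every strategy *)
  (forall s : strategy, legal L k s ->
     forall l, Un_cv (hider_partial L k p s) l -> game_value L p <= l)
  /\
  (* the uniform depth-first strategy is a legal strategy ... *)
  legal L k (dfs L k)
  /\
  (* ... guaranteeing at most val(p) against every hider edge *)
  (forall e : nat, (e < L)%nat ->
     exists l, Un_cv (exp_partial L k p (dfs L k) e) l /\ l <= game_value L p).
Proof.
  split; [|split].
  - intros s Hl l Hcv. eapply lower_bound; eauto.
  - apply dfs_legal; auto.
  - intros e he. apply upper_bound; auto.
Qed.
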